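(* Let $B$ be an $(n,n-1)$-blocker for a convex $n$-gon with vertices $0,\dots,n-1$ (indices mod $n$). If the ear-cover $(i-1,i+1)$ does not belong to $B$, then $\deg_B(i)\le 2$.
   Context: An edge $(i,j)$ is the segment between vertices $i,j$; boundary edges are $(i,i+1)$, diagonals are the other edges. Two edges cross if they share an interior point. A triangulation is a maximal set of pairwise non-crossing diagonals. A blocker is a set $B$ of diagonals having a diagonal in common with every triangulation; it is saturated if for every $e\in B$, $B\setminus\{e\}$ is not a blocker. An $(n,k)$-blocker is a saturated blocker of size $k$ for a convex $n$-gon. The diagonal $(i-1,i+1)$ is the ear-cover covering $i$. $\deg_B(i)$ is the number of edges of $B$ incident to $i$. *)

(* Defs.v *)
(* Convex n-gon with vertices 0..n-1 (type 'I_n), in cyclic order. *)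
From mathcomp Require Import all_boot.
Set Implicit Arguments. Unset Strict Implicit. Unset Printing Implicit Defensive.

Definition vshift n (i : 'I_n) (k : nat) : 'I_n :=
  Ordinal (ltn_pmod (i + k) (leq_ltn_trans (leq0n i) (ltn_ord i))).

(* An edge (i,j), i <> j, is represented by the 2-element vertex set {i,j}. *)
Definition is_edge n (e : {set 'I_n}) : bool := #|e| == 2.

Definition is_boundary n (e : {set 'I_n}) : bool :=
  [exists i : 'I_n, e == [set i; vshift i 1]].

Definition is_diagonal n (e : {set 'I_n}) : bool :=
  is_edge e && ~~ is_boundary e.

(* In a convex polygon two edges share an interior point iff their endpoints
   strictly interleave in the cyclic order. *)
Definition cross n (e f : {set 'I_n}) : bool :=
  [exists a : 'I_n, exists b : 'I_n, exists c : 'I_n, exists d : 'I_n,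
    [&& (a < c)%N, (c < b)%N, (b < d)%N &
        ((e == [set a; b]) && (f == [set c; d])) ||
        ((e == [set c; d]) && (f == [set a; b]))]].

Definition triangulation n (T : {set {set 'I_n}}) : Prop :=
  (forall e, e \in T -> is_diagonal e) /\
  (forall e f, e \in T -> f \in T -> ~~ cross e f) /\
  (forall d, is_diagonal d -> d \notin T -> exists2 t, t \in T & cross d t).

Definition blocker n (B : {set {set 'I_n}}) : Prop :=
  (forall e, e \in B -> is_diagonal e) /\
  (forall T, triangulation T -> exists2 e, e \in B & e \in T).

Definition saturated n (B : {set {set 'I_n}}) : Prop :=
  forall e, e \in B -> ~ blocker (B :\ e).

Definition nk_blocker n (B : {set {set 'I_n}}) (k : nat) : Prop :=
  blocker B /\ saturated B /\ #|B| = k.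

Definition ear_cover n (i : 'I_n) : {set 'I_n} :=
  [set vshift i n.-1; vshift i 1].

Definition deg n (B : {set {set 'I_n}}) (i : 'I_n) : nat :=
  #|[set e in B | i \in e]|.

(* Main.v *)
Require Import Defs.
From mathcomp Require Import all_boot.
From mathcomp Require Import zify.
Set Implicit Arguments. Unset Strict Implicit. Unset Printing Implicit Defensive.

Lemma set2_eqE (T : finType) (a b c d : T) :
  ([set a; b] == [set c; d]) = ((a == c) && (b == d)) || ((a == d) && (b == c)).
Proof.
apply/eqP/idP; last first.
  by case/orP => /andP[/eqP-> /eqP->] //; exact: setUC.
move=> E.
have ha : a \in [set c; d] by rewrite -E set21.
have hb : b \in [set c; d] by rewrite -E set22.
have hc : c \in [set a; b] by rewrite E set21.
have hd : d \in [set a; b] by rewrite E set22.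
move: ha hb hc hd; rewrite !inE.
by do 4! case/orP => /eqP ?; subst; rewrite ?eqxx ?orbT.
Qed.

Lemma edgeP n (e : {set 'I_n}) : is_edge e -> exists a b : 'I_n, (a < b)%N /\ e = [set a; b].
Proof.
case/cards2P => x [y [xy ->]].
case: (ltngtP x y) => h.
- by exists x, y.
- by exists y, x; rewrite setUC.
- by move: xy; rewrite (val_inj h) eqxx.
Qed.

Lemma is_edge2 n (a b : 'I_n) : a != b -> is_edge [set a; b].
Proof. by move=> ab; rewrite /is_edge cards2 ab. Qed.

Lemma ordE n (a b : 'I_n) : (a == b) = (nat_of_ord a == nat_of_ord b).
Proof. by []. Qed.

Lemma crossE n (a b c d : 'I_n) : (a < b)%N -> (c < d)%N ->
  cross [set a; b] [set c; d] = [|| [&& a < c, c < b & b < d] | [&& c < a, a < d & d < b]]%N.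
Proof.
move=> ab cd; apply/idP/idP.
- case/existsP => a' /existsP [b' /existsP [c' /existsP [d' /and4P [h1 h2 h3 /orP h]]]].
  case: h => /andP [e1 e2]; move: e1 e2; rewrite !set2_eqE !ordE => e1 e2; lia.
- case/orP => /and3P [h1 h2 h3].
  + apply/existsP; exists a; apply/existsP; exists b; apply/existsP; exists c; apply/existsP; exists d.
    by rewrite h1 h2 h3 !eqxx.
  + apply/existsP; exists c; apply/existsP; exists d; apply/existsP; exists a; apply/existsP; exists b.
    by rewrite h1 h2 h3 !eqxx orbT.
Qed.

Lemma vshift1E n (k : 'I_n) : nat_of_ord (vshift k 1) = if k.+1 == n then 0 else k.+1.
Proof.
rewrite /vshift /= addn1; case: eqP => [->|h]; first by rewrite modnn.
by rewrite modn_small //; have := ltn_ord k; lia.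
Qed.

Lemma vshiftPE n (k : 'I_n) : nat_of_ord (vshift k n.-1) = if k == 0 :> nat then n.-1 else k.-1.
Proof.
rewrite /vshift /=; have := ltn_ord k; case: eqP => [->|h] kn.
  by rewrite add0n modn_small //; lia.
have -> : (k + n.-1 = k.-1 + n)%N by lia.
by rewrite modnDr modn_small //; lia.
Qed.

Lemma bndE n (a b : 'I_n) : (a < b)%N ->
  is_boundary [set a; b] = (b == a.+1 :> nat) || ((a == 0 :> nat) && (b == n.-1 :> nat)).
Proof.
move=> ab; have bn := ltn_ord b; apply/idP/idP.
- case/existsP => k; rewrite set2_eqE !ordE vshift1E; have := ltn_ord k; case: (_ =P n); lia.
- case/orP => h.
  + apply/existsP; exists a; rewrite set2_eqE !ordE vshift1E; case: (_ =P n); lia.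
  + apply/existsP; exists b; rewrite set2_eqE !ordE vshift1E; case: (_ =P n); lia.
Qed.


Lemma ear_sorted n (i : 'I_n) : (3 <= n)%N -> exists x y : 'I_n,
  [/\ (x < y)%N, ear_cover i = [set x; y] &
    [|| [&& i == 0 :> nat, x == 1 :> nat & y == n.-1 :> nat],
        [&& i == n.-1 :> nat, x == 0 :> nat & y == n.-2 :> nat] |
        [&& 0 < i < n.-1, x == i.-1 :> nat & y == i.+1 :> nat]]%N].
Proof.
move=> n3; have := ltn_ord i.
have ex := vshiftPE i; have ey := vshift1E i.
case: (ltngtP (vshift i n.-1) (vshift i 1)) => h.
- exists (vshift i n.-1), (vshift i 1); split => //.
  move: ex ey h; case: eqP => ?; case: (_ =P n) => ?; move=> -> ->; lia.
- exists (vshift i 1), (vshift i n.-1); split => //; first by rewrite /ear_cover setUC.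
  move: ex ey h; case: eqP => ?; case: (_ =P n) => ?; move=> -> ->; lia.
- move: ex ey h; case: eqP => ?; case: (_ =P n) => ?; move=> -> ->; lia.
Qed.

Lemma liftE n (i : 'I_n) (a : 'I_n.-1) :
  nat_of_ord (lift i a) = if (i <= a)%N then a.+1 else a.
Proof. by rewrite /= /bump; case: leqP. Qed.

Lemma F2 n (i : 'I_n) (a b : 'I_n.-1) : lift i @: [set a; b] = [set lift i a; lift i b].
Proof. by rewrite imsetU1 imset_set1. Qed.

Lemma lift_lt n (i : 'I_n) (a b : 'I_n.-1) : (lift i a < lift i b)%N = (a < b)%N.
Proof. rewrite !liftE; case: (leqP i a) => ?; case: (leqP i b) => ?; apply/idP/idP; lia. Qed.

Lemma bnd_lift1 n (i : 'I_n) (a b : 'I_n.-1) : (3 <= n)%N -> (a < b)%N ->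
  is_boundary [set a; b] ->
  is_boundary [set lift i a; lift i b] \/ [set lift i a; lift i b] = ear_cover i.
Proof.
move=> n3 ab; have [x [y [xy -> hx]]] := ear_sorted i n3.
have fab : (lift i a < lift i b)%N by rewrite lift_lt.
rewrite bndE // bndE // => h.
have bn := ltn_ord b; have := ltn_ord i.
have : (lift i b == (lift i a).+1 :> nat) || ((lift i a == 0 :> nat) && (lift i b == n.-1 :> nat))
   || ((lift i a == x :> nat) && (lift i b == y :> nat)).
  rewrite !liftE; move: h hx; case: (leqP i a) => ?; case: (leqP i b) => ?; lia.
case/orP => [->|h2]; first by left.
by right; apply/eqP; rewrite set2_eqE !ordE h2.
Qed.

Lemma bnd_lift2 n (i : 'I_n) (a b : 'I_n.-1) : (a < b)%N ->
  is_boundary [set lift i a; lift i b] -> is_boundary [set a; b].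
Proof.
move=> ab; have fab : (lift i a < lift i b)%N by rewrite lift_lt.
rewrite bndE // bndE //.
have bn := ltn_ord b; have := ltn_ord i.
rewrite !liftE; case: (leqP i a) => ?; case: (leqP i b) => ?; lia.
Qed.

Lemma cross_lift n (i : 'I_n) (a b c d : 'I_n.-1) : (a < b)%N -> (c < d)%N ->
  cross [set lift i a; lift i b] [set lift i c; lift i d] = cross [set a; b] [set c; d].
Proof.
by move=> ab cd; rewrite !crossE ?lift_lt.
Qed.

Lemma diag_sorted n (e : {set 'I_n}) : is_diagonal e ->
  exists a b : 'I_n, [/\ (a < b)%N, e = [set a; b] & ~~ is_boundary [set a; b]].
Proof.
case/andP => /edgeP [a [b [ab E]]]; rewrite E => nb; by exists a, b.
Qed.

Lemma diagE n (a b : 'I_n) : (a < b)%N -> is_diagonal [set a; b] = ~~ is_boundary [set a; b].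
Proof. by move=> ab; rewrite /is_diagonal is_edge2 // neq_ltn ab. Qed.


Lemma ear_diag n (i : 'I_n) : (4 <= n)%N -> is_diagonal (ear_cover i).
Proof.
move=> n4; have [x [y [xy -> hx]]] := ear_sorted i (ltnW n4).
rewrite diagE // bndE //; move: hx; have := ltn_ord i; lia.
Qed.

Lemma ear_nocross n (i : 'I_n) (a b : 'I_n.-1) : (3 <= n)%N -> (a < b)%N ->
  ~~ cross (ear_cover i) [set lift i a; lift i b] /\
  ~~ cross [set lift i a; lift i b] (ear_cover i).
Proof.
move=> n3 ab; have [x [y [xy -> hx]]] := ear_sorted i n3.
have fab : (lift i a < lift i b)%N by rewrite lift_lt.
rewrite !crossE //; have := ltn_ord i; have := ltn_ord b; move: hx.
rewrite !liftE; case: (leqP i a) => ?; case: (leqP i b) => ?; split; lia.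
Qed.

Lemma ear_cross_star n (i a b : 'I_n) : (3 <= n)%N -> (a < b)%N ->
  ~~ is_boundary [set a; b] -> (i == a) || (i == b) -> cross [set a; b] (ear_cover i).
Proof.
move=> n3 ab; have [x [y [xy -> hx]]] := ear_sorted i n3.
rewrite bndE // crossE // !ordE; have := ltn_ord i; have := ltn_ord b; move: hx; lia.
Qed.


Definition Fl n (i : 'I_n) (e : {set 'I_n.-1}) : {set 'I_n} := lift i @: e.

Lemma diag_lift n (i : 'I_n) (e : {set 'I_n.-1}) : is_diagonal e -> is_diagonal (lift i @: e).
Proof.
case/diag_sorted => a [b [ab -> nb]]; rewrite F2 diagE ?lift_lt //.
by apply: contra nb; exact: bnd_lift2.
Qed.

Lemma nocross_self n (a b : 'I_n) : (a < b)%N -> ~~ cross [set a; b] [set a; b].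
Proof. by move=> ab; rewrite crossE //; lia. Qed.

Lemma tri_lift n (i : 'I_n) (T' : {set {set 'I_n.-1}}) : (4 <= n)%N ->
  triangulation T' -> triangulation (ear_cover i |: (Fl i @: T')).
Proof.
move=> n4 [Hd [Hnc Hmax]]; have n3 : (3 <= n)%N by lia.
split; [|split].
- move=> e; rewrite in_setU1 => /predU1P [->|/imsetP [e' He' ->]].
    exact: ear_diag.
  exact: diag_lift (Hd _ He').
- move=> e f; rewrite !in_setU1 => /predU1P [->|/imsetP [e' He' ->]] /predU1P [->|/imsetP [f' Hf' ->]]; rewrite /Fl.
  + have [x [y [xy -> _]]] := ear_sorted i n3; exact: nocross_self.
  + have [a [b [ab -> _]]] := diag_sorted (Hd _ Hf'); rewrite F2; exact: (ear_nocross i n3 ab).1.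
  + have [a [b [ab -> _]]] := diag_sorted (Hd _ He'); rewrite F2; exact: (ear_nocross i n3 ab).2.
  + have [a [b [ab Ee _]]] := diag_sorted (Hd _ He').
    have [c [d [cd Ef _]]] := diag_sorted (Hd _ Hf').
    by rewrite Ee Ef !F2 cross_lift // -Ee -Ef; apply: Hnc.
- move=> d Hd' dnT; case/diag_sorted: Hd' => a [b [ab Ed nb]].
  case: (boolP ((i == a) || (i == b))) => hi.
    by exists (ear_cover i); [rewrite setU11 | rewrite Ed; exact: ear_cross_star].
  move: hi; rewrite negb_or => /andP [ia ib].
  have [a' Ea _] := unlift_some ia; have [b' Eb _] := unlift_some ib.
  have ab' : (a' < b')%N by rewrite -(lift_lt i) -Ea -Eb.
  have nb' : ~~ is_boundary [set a'; b'].
    apply/negP => hb; case: (bnd_lift1 i n3 ab' hb) => h.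
      by rewrite -Ea -Eb in h; rewrite h in nb.
    by apply/negP: dnT; rewrite Ed Ea Eb h setU11.
  have dn' : [set a'; b'] \notin T'.
    by apply: contra dnT => h; rewrite Ed Ea Eb -F2 in_setU1 (imset_f (Fl i)) ?orbT.
  have hd' : is_diagonal [set a'; b'] by rewrite diagE.
  have [t' Ht' Hc] := Hmax _ hd' dn'.
  exists (Fl i t'); first by rewrite in_setU1 imset_f ?orbT.
  have [c [d0 [cd Et _]]] := diag_sorted (Hd _ Ht').
  by rewrite /Fl Et F2 Ed Ea Eb cross_lift // -Et.
Qed.

Lemma contract n (B : {set {set 'I_n}}) (i : 'I_n) : (4 <= n)%N -> blocker B ->
  ear_cover i \notin B ->
  blocker [set e : {set 'I_n.-1} | lift i @: e \in B] /\ #|B| = (#|[set e : {set 'I_n.-1} | lift i @: e \in B]| + deg B i)%N.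
Proof.
move=> n4 [HBd HBt] hear; have n3 : (3 <= n)%N by lia.
set B' := [set e : {set 'I_n.-1} | lift i @: e \in B].
split; first split.
- move=> e; rewrite inE => he.
  have hd := HBd _ he; case/andP: (hd) => hc _.
  have : is_edge e by rewrite /is_edge -(card_imset _ (@lift_inj _ i)).
  case/edgeP => a [b [ab E]]; rewrite E diagE //; apply/negP => hb.
  case: (bnd_lift1 i n3 ab hb) => h.
    by move: hd; rewrite E F2 diagE ?lift_lt // h.
  by move: he; rewrite E F2 h (negbTE hear).
- move=> T' HT'; have [e he] := HBt _ (tri_lift i n4 HT').
  rewrite in_setU1 => /predU1P [E|/imsetP [t' Ht' E]].
    by rewrite -E he in hear.
  by exists t' => //; rewrite inE; rewrite /Fl in E; rewrite -E.
- have -> : deg B i = #|B :&: [set e : {set 'I_n} | i \in e]|.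
    by rewrite /deg; apply: eq_card => e; rewrite !inE.
  rewrite -(cardsID [set e : {set 'I_n} | i \in e] B) addnC; congr (_ + _).
  have -> : B :\: [set e : {set 'I_n} | i \in e] = Fl i @: B'.
    apply/setP => e; rewrite !inE; apply/andP/imsetP.
    + case=> nie eB; have [a [b [ab E _]]] := diag_sorted (HBd _ eB).
      move: nie; rewrite E !inE negb_or => /andP [ia ib].
      have [a' Ea _] := unlift_some ia; have [b' Eb _] := unlift_some ib.
      by exists [set a'; b']; rewrite ?inE /Fl F2 -Ea -Eb // -E.
    + case=> e' he' ->; rewrite inE in he'; split => //.
      by apply/imsetP => [[x _ E]]; move: (neq_lift i x); rewrite -E eqxx.
  by rewrite (card_imset _ (imset_inj (@lift_inj _ i))).
Qed.


Lemma fan_witness m (j a b : 'I_m) : (a < b)%N -> ~~ is_boundary [set a; b] ->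
  j != a -> j != b ->
  exists x : 'I_m, [&& j != x, ~~ is_boundary [set j; x] & cross [set a; b] [set j; x]].
Proof.
move=> ab; rewrite bndE // !ordE => nb ja jb.
have bm := ltn_ord b.
have [x hx] : exists x : 'I_m, ((a < j < b) && ((b < x) || (x < a))) || (((j < a) || (b < j)) && (x == a.+1 :> nat)).
  case: (boolP (a < j < b)%N) => hj.
  - case: (posnP a) => a0.
    + have hm : (m.-1 < m)%N by lia.
      exists (Ordinal hm) => /=; lia.
    + have hm : (0 < m)%N by lia.
      exists (Ordinal hm) => /=; lia.
  - have hm : (a.+1 < m)%N by lia.
    exists (Ordinal hm) => /=; lia.
exists x; case: (ltngtP j x) => h.
- by rewrite bndE // crossE // !ordE; lia.
- by rewrite setUC bndE // crossE // !ordE; lia.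
- lia.
Qed.

Lemma fan_tri m (j : 'I_m) : triangulation [set e : {set 'I_m} | is_diagonal e && (j \in e)].
Proof.
split; [|split].
- by move=> e; rewrite inE => /andP [].
- move=> e f; rewrite !inE => /andP [/diag_sorted [a [b [ab -> _]]] ja] /andP [/diag_sorted [c [d [cd -> _]]] jc].
  move: ja jc; rewrite !inE crossE // !ordE; lia.
- move=> d hd; rewrite inE hd /= => jd.
  have [a [b [ab Ed nb]]] := diag_sorted hd.
  move: jd; rewrite Ed !inE negb_or => /andP [ja jb].
  have [x /and3P [jx nbx cx]] := fan_witness ab nb ja jb.
  exists [set j; x]; last by [].
  by rewrite inE set21 andbT /is_diagonal is_edge2.
Qed.

Lemma blocker_deg m (B : {set {set 'I_m}}) (j : 'I_m) : blocker B -> (0 < deg B j)%N.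
Proof.
case=> _ HB; have [e he] := HB _ (fan_tri j).
rewrite inE => /andP [_ je]; apply/card_gt0P; exists e; by rewrite inE he je.
Qed.

Lemma lower m (B : {set {set 'I_m}}) : blocker B -> (m - 2 <= #|B|)%N.
Proof.
elim: m B => [|m IH] B HB; first by [].
have hdeg := blocker_deg ord0 HB.
have B0 : (0 < #|B|)%N.
  apply: leq_trans hdeg _; apply: subset_leq_card; apply/subsetP => e; by rewrite inE => /andP [].
case: (leqP m.+1 3) => m3; first by lia.
case: (boolP [forall k : 'I_m.+1, (0 < k < m)%N ==> (ear_cover k \in B)]) => hall.
- pose g (k : 'I_(m - 1)) : {set 'I_m.+1} := ear_cover (inord k.+1 : 'I_m.+1).
  have ginj : injective g.
    move=> k k'; rewrite /g.
    have [x [y [xy -> hx]]] := ear_sorted (inord k.+1 : 'I_m.+1) (ltnW m3).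
    have [x' [y' [xy' -> hx']]] := ear_sorted (inord k'.+1 : 'I_m.+1) (ltnW m3).
    move/eqP; rewrite set2_eqE !ordE => he; apply: val_inj => /=.
    have hk := ltn_ord k; have hk' := ltn_ord k'.
    move: hx hx' he; rewrite !inordK; lia.
  have sub : g @: [set: 'I_(m - 1)] \subset B.
    apply/subsetP => e /imsetP [k _ ->]; rewrite /g.
    have hk := ltn_ord k.
    move/forallP: hall => /(_ (inord k.+1)) /implyP; apply; rewrite inordK; lia.
  have := subset_leq_card sub; rewrite card_imset // cardsT card_ord. move=> h; apply: leq_trans _ h; lia.
- case/forallPn: hall => k; rewrite negb_imply => /andP [_ hear].
  have [HB' Hc] := contract m3 HB hear.
  rewrite Hc; apply: leq_trans _ (leq_add (IH _ HB') (blocker_deg k HB)); lia.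
Qed.

Theorem mainTheorem11 (n : nat) (B : {set {set 'I_n}}) (i : 'I_n) :
  (3 <= n)%N -> nk_blocker B n.-1 -> ear_cover i \notin B -> (deg B i <= 2)%N.
Proof.
move=> n3 [HB [_ Hc]] hear.
have hdegB : (deg B i <= #|B|)%N.
  by apply: subset_leq_card; apply/subsetP => e; rewrite inE => /andP [].
case: (leqP n 3) => n4.
  rewrite Hc in hdegB; lia.
have [HB' Hc'] := contract n4 HB hear.
have : (n.-1 - 2 + deg B i <= #|B|)%N.
  by rewrite Hc'; apply: leq_add (lower HB') (leqnn _).
rewrite Hc; lia.
Qed.
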